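(* Let $A,B,E,C$ define the stochastic system $X_{k+1}=AX_k+BU_k+EW_k$, $Y_k=CX_k$, with i.i.d. disturbances $W_k\in\mathcal L^2$ of known distribution, $(A,B)$ controllable, $(A,C)$ observable, and $T_{\mathrm{ini}}$ an integer not smaller than the lag of $(A,C)$. Assume it is equivalent to the VARX model $Y_k=\hat A\,Y_{[k-T_{\mathrm{ini}},k-1]}+\hat B\,U_{[k-T_{\mathrm{ini}},k-1]}+W_{k-1}$ with $\hat A\in\mathbb R^{n_y\times T_{\mathrm{ini}}n_y}$, $\hat B\in\mathbb R^{n_y\times T_{\mathrm{ini}}n_u}$, $W_k\in\mathcal L^2(\mathbb R^{n_y})$, and that the initial input-output trajectory $(U,Y)_{[1-T_{\mathrm{ini}},0]}$ is deterministic. Let $(u^{\mathrm{ud}},y^{\mathrm{ud}})_{[1-T_{\mathrm{ini}},T]}$ be real data with $y^{\mathrm{ud}}_k=\hat A\,y^{\mathrm{ud}}_{[k-T_{\mathrm{ini}},k-1]}+\hat B\,u^{\mathrm{ud}}_{[k-T_{\mathrm{ini}},k-1]}$ for all $k\in\mathbb I_{[1,T]}$, and let $N\in\mathbb N^+$ satisfy $\operatorname{rank}\begin{bmatrix}\mathcal H_{T_{\mathrm{ini}}+N}(u^{\mathrm{ud}}_{[1,T]})\\ \mathcal H_{T_{\mathrm{ini}}}(y^{\mathrm{ud}}_{[1,T-N]})\end{bmatrix}=(T_{\mathrm{ini}}+N)n_u+T_{\mathrm{ini}}n_y$. With the PCE notation of the context, fix $j\in\mathbb I_{[1,L-1]}$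 and write $k'=k'(j)$, $\bar N=N-k'$. Then real sequences $(\mathsf u^j,\mathsf y^j)_{[1,N]}$ form a trajectory of the $j$-th PCE coefficient dynamics, i.e. with $(\mathsf u^j,\mathsf y^j)_{[1-T_{\mathrm{ini}},0]}=0$, $$\mathsf y^j_k=\hat A\,\mathsf y^j_{[k-T_{\mathrm{ini}},k-1]}+\hat B\,\mathsf u^j_{[k-T_{\mathrm{ini}},k-1]}+\mathsf w^j_{k-1},\quad k\in\mathbb I_{[1,N]},$$ and the causality requirement $\mathsf u^j_k=0$ for $k\in\mathbb I_{[1,k']}$, if and only if there exists $\mathsf g^j\in\mathbb R^{T-N-T_{\mathrm{ini}}+1}$ such that $$(\mathsf u^j,\mathsf y^j)_{[1,k']}=0,\qquad \mathsf y^j_{k'+1}=\mathsf w^{I(j)},$$ $$\begin{bmatrix}\mathcal H_{T_{\mathrm{ini}}-1}(u^{\mathrm{ud}}_{[1,T-N-1]})\\ \mathcal H_{T_{\mathrm{ini}}-1}(y^{\mathrm{ud}}_{[1,T-N-1]})\\ \mathcal H_{\bar N}(u^{\mathrm{ud}}_{[T_{\mathrm{ini}},T-k'-1]})\\ \mathcal H_{\bar N}(y^{\mathrm{ud}}_{[T_{\mathrm{ini}},T-k'-1]})\end{bmatrix}\mathsf g^j=\begin{bmatrix}0_{(T_{\mathrm{ini}}-1)n_u\times1}\\ 0_{(T_{\mathrm{ini}}-1)n_y\times1}\\ \mathsf u^j_{[k'+1,N]}\\ \mathsf y^j_{[k'+1,N]}\end{bmatrix}.$$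
   Context: $\mathcal L^2(\mathbb R^n)$: $\mathbb R^n$-valued random variables with finite second moments. $\mathbb I_{[a,b]}=\{a,\dots,b\}$; $z_{[a,b]}=[z_a^\top,\dots,z_b^\top]^\top$. For $z_{[a,b]}$ with $z_k\in\mathbb R^n$ and $M\le b-a+1$, $\mathcal H_M(z_{[a,b]})$ is the $Mn\times(b-a-M+2)$ block Hankel matrix whose $(r,c)$ block is $z_{a+r+c-2}$. The lag of observable $(A,C)$ is the smallest $\ell$ with $[C^\top,\dots,(CA^{\ell-1})^\top]^\top$ of full column rank. PCE setup: each $W_k$ has an exact finite polynomial chaos expansion $W_k=\sum_{n=0}^{L_w-1}\mathsf w^n\psi^n(\xi_k)$ with $\mathsf w^n\in\mathbb R^{n_y}$, orthogonal polynomials $\psi^n$, $\psi^0=1$, and independent stochastic germs $\xi_k$ (same coefficients for all $k$). The joint basis $\{\phi^j\}_{j=0}^{L-1}$, $L=1+N(L_w-1)$, is $\phi^0=1$ and $\phi^{k(L_w-1)+n}=\psi^n(\xi_k)$ for $k\in\mathbb I_{[0,N-1]}$, $n\in\mathbb I_{[1,L_w-1]}$. Let $\mathcal I_k=\mathbb I_{[1+k(L_w-1),(k+1)(L_w-1)]}$; for $j\ge1$, $k'(j)$ is the $k$ with $j\in\mathcal I_k$, and $I(j)=j-k'(j)(L_w-1)$. The coefficients of $W_k$ in the joint basis are $\mathsf w^j_k=\mathbb E[W]$ if $j=0$, $\mathsf w^{I(j)}$ if $j\in\mathcal I_k$, and $0$ otherwise. The causality requirement stems from inputs/outputs at time $k$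 depending only on $W_0,\dots,W_{k-1}$. *)

(* Defs.v *)
From HB Require Import structures.
From mathcomp Require Import all_boot all_order all_algebra.
Set Implicit Arguments. Unset Strict Implicit. Unset Printing Implicit Defensive.
Import Order.TTheory GRing.Theory Num.Theory.
Local Open Scope ring_scope.

(* stack z a m = z_[a, a+m-1] = [z_a; z_(a+1); ...; z_(a+m-1)] : 'cV_(m*n) *)
Definition stack (R : nzRingType) (n : nat) (z : int -> 'cV[R]_n) (a : int) (m : nat)
  : 'cV[R]_(m * n) :=
  (mxvec (\matrix_(i < m, c < n) z (a + (i : nat)%:Z) c 0))^T.

(* hankel z a M q = H_M(z_[a,b]) with q = b - a - M + 2 columns:
   column c (0-based) is z_[a+c, a+c+M-1], i.e. block (r,c) (1-based) is
   z_(a+r+c-2). *)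
Definition hankel (R : nzRingType) (n : nat) (z : int -> 'cV[R]_n) (a : int)
  (M q : nat) : 'M[R]_(M * n, q) :=
  \matrix_(i < M * n, c < q) (stack z (a + (c : nat)%:Z) M) i 0.

(* PCE bookkeeping.  Lw = number of PCE terms of each W_k;
   joint basis index j >= 1 lies in I_k = [1 + k(Lw-1), (k+1)(Lw-1)]. *)
Definition kprime (Lw j : nat) : nat := (j.-1 %/ Lw.-1)%N.
Definition Iidx (Lw j : nat) : nat := (j - kprime Lw j * Lw.-1)%N.

(* Coefficient of W_k on the joint basis element phi^j:
   E[W] if j = 0, w^{I(j)} if j in I_k, 0 otherwise.
   wmean = E[W], wc n = w^n. *)
Definition wcoef (R : nzRingType) (ny Lw : nat) (wmean : 'cV[R]_ny)
  (wc : nat -> 'cV[R]_ny) (j : nat) (k : int) : 'cV[R]_ny :=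
  if j == 0%N then wmean
  else if k == (kprime Lw j)%:Z then wc (Iidx Lw j) else 0.

(* Main.v *)
Require Import Defs.
From HB Require Import structures.
From mathcomp Require Import all_boot all_order all_algebra.
Import Order.TTheory GRing.Theory Num.Theory.
From mathcomp Require Import zify.
Local Open Scope ring_scope.
Set Implicit Arguments. Unset Strict Implicit. Unset Printing Implicit Defensive.

Section H.
Variable R : comNzRingType.

Lemma stackE n (z : int -> 'cV[R]_n) a m (r : 'I_m) (c : 'I_n) :
  stack z a m (mxvec_index r c) 0 = z (a + (r : nat)%:Z) c 0.
Proof. by rewrite /stack mxE mxvecE mxE. Qed.

Lemma stack_ext n (z z' : int -> 'cV[R]_n) a m :
  (forall i : nat, (i < m)%N -> z (a + i%:Z) = z' (a + i%:Z)) ->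
  stack z a m = stack z' a m.
Proof.
move=> h; apply/matrixP => i k; rewrite (ord1 k).
by case/mxvec_indexP: i => r c; rewrite !stackE h.
Qed.

Lemma stack_inj n (z z' : int -> 'cV[R]_n) a b m :
  stack z a m = stack z' b m ->
  forall i : nat, (i < m)%N -> z (a + i%:Z) = z' (b + i%:Z).
Proof.
move=> h i lt; apply/matrixP => c k; rewrite (ord1 k).
have := stackE z a (Ordinal lt) c; rewrite h stackE /= => <-. by [].
Qed.

Definition comb n q (z : int -> 'cV[R]_n) (g : 'cV[R]_q) (t : int) : 'cV[R]_n :=
  \sum_(c < q) g c 0 *: z (t + (c : nat)%:Z).

Lemma hankel_mul n (z : int -> 'cV[R]_n) a M q (g : 'cV[R]_q) :
  hankel z a M q *m g = stack (comb z g) a M.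
Proof.
apply/matrixP => i k; rewrite (ord1 k).
case/mxvec_indexP: i => r c; rewrite stackE /comb !mxE summxE.
apply: eq_bigr => d _; rewrite /hankel !mxE mxvecE mxE.
by rewrite mulrC addrAC.
Qed.

Lemma stack_comb n q (z : int -> 'cV[R]_n) (g : 'cV[R]_q) b m :
  stack (comb z g) b m = \sum_(c < q) g c 0 *: stack z (b + (c : nat)%:Z) m.
Proof.
apply/matrixP => i k; rewrite (ord1 k).
case/mxvec_indexP: i => r c; rewrite stackE /comb !summxE.
apply: eq_bigr => d _; rewrite !mxE mxvecE mxE.
by rewrite addrAC.
Qed.

Lemma comb_varx nu ny Tini T q (Ahat : 'M[R]_(ny, Tini * ny)) (Bhat : 'M[R]_(ny, Tini * nu))
  (uud : int -> 'cV[R]_nu) (yud : int -> 'cV[R]_ny) (g : 'cV[R]_q) (t : int) :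
  (forall k : int, 1 <= k <= T%:Z ->
     yud k = Ahat *m stack yud (k - Tini%:Z) Tini
             + Bhat *m stack uud (k - Tini%:Z) Tini) ->
  1 <= t -> t + q%:Z <= T%:Z + 1 ->
  comb yud g t = Ahat *m stack (comb yud g) (t - Tini%:Z) Tini
             + Bhat *m stack (comb uud g) (t - Tini%:Z) Tini.
Proof.
move=> hd h1 h2; rewrite !stack_comb !mulmx_sumr -big_split /comb.
apply: eq_bigr => c _; rewrite hd; last first.
  have := ltn_ord c; lia.
by rewrite scalerDr -!scalemxAr [t - _ + _]addrAC.
Qed.

Lemma stack0 n a m : stack (fun _ => 0 : 'cV[R]_n) a m = 0.
Proof.
apply/matrixP => i k; rewrite (ord1 k).
by case/mxvec_indexP: i => r c; rewrite stackE !mxE.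
Qed.

Lemma stack_ext2 n (z z' : int -> 'cV[R]_n) a b m :
  (forall i : nat, (i < m)%N -> z (a + i%:Z) = z' (b + i%:Z)) ->
  stack z a m = stack z' b m.
Proof.
move=> h; apply/matrixP => i k; rewrite (ord1 k).
by case/mxvec_indexP: i => r c; rewrite !stackE h.
Qed.

Lemma stack_zero n (z : int -> 'cV[R]_n) a m :
  (forall i : nat, (i < m)%N -> z (a + i%:Z) = 0) -> stack z a m = 0.
Proof. by move=> h; rewrite -(stack0 n a m); apply: stack_ext. Qed.

Lemma stack_inj0 n (z : int -> 'cV[R]_n) a m :
  stack z a m = 0 -> forall i : nat, (i < m)%N -> z (a + i%:Z) = 0.
Proof.
move=> h i lt; have h' : stack z a m = stack (fun _ => 0) a m by rewrite stack0.
exact: (stack_inj h' lt).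
Qed.

Lemma int_nat (t a : int) : a <= t -> t = a + (`|t - a|%N)%:Z.
Proof. move=> h; lia. Qed.
End H.

Theorem lemma4 (R : realFieldType) (nu ny Tini T N Lw : nat)
  (Ahat : 'M[R]_(ny, Tini * ny)) (Bhat : 'M[R]_(ny, Tini * nu))
  (uud : int -> 'cV[R]_nu) (yud : int -> 'cV[R]_ny)
  (wmean : 'cV[R]_ny) (wc : nat -> 'cV[R]_ny)
  (j : nat) (uj : int -> 'cV[R]_nu) (yj : int -> 'cV[R]_ny) :
  (1 <= Tini)%N ->
  (0 < N)%N ->
  (Tini + N <= T + 1)%N ->
  (* the data obey the (noise-free) VARX model on I_[1,T] *)
  (forall k : int, 1 <= k <= T%:Z ->
     yud k = Ahat *m stack yud (k - Tini%:Z) Tini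
             + Bhat *m stack uud (k - Tini%:Z) Tini) ->
  (* persistency-of-excitation rank condition *)
  \rank (col_mx (hankel uud 1 (Tini + N) (T + 1 - Tini - N))
                (hankel yud 1 Tini (T + 1 - Tini - N)))
    = ((Tini + N) * nu + Tini * ny)%N ->
  (* j in I_[1, L-1] with L = 1 + N (Lw - 1) *)
  (1 <= j <= N * Lw.-1)%N ->
  (* zero initial trajectory of the j-th PCE coefficients *)
  (forall k : int, 1 - Tini%:Z <= k <= 0 -> uj k = 0 /\ yj k = 0) ->
  let kp := kprime Lw j in
  let Nb := (N - kp)%N in
  let q := (T + 1 - Tini - N)%N in
  ((forall k : int, 1 <= k <= N%:Z ->
      yj k = Ahat *m stack yj (k - Tini%:Z) Tini
             + Bhat *m stack uj (k - Tini%:Z) Tini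
             + wcoef Lw wmean wc j (k - 1)) /\
   (forall k : int, 1 <= k <= kp%:Z -> uj k = 0))
  <->
  (exists g : 'cV[R]_q,
     (forall k : int, 1 <= k <= kp%:Z -> uj k = 0 /\ yj k = 0) /\
     yj (kp%:Z + 1) = wc (Iidx Lw j) /\
     col_mx (col_mx (hankel uud 1 Tini.-1 q) (hankel yud 1 Tini.-1 q))
            (col_mx (hankel uud Tini%:Z Nb q) (hankel yud Tini%:Z Nb q)) *m g
     = col_mx (col_mx 0 0)
              (col_mx (stack uj (kp%:Z + 1) Nb) (stack yj (kp%:Z + 1) Nb))).
Proof.
move=> hT hN hTN hd hrank hj hinit kp Nb q.
case/andP: hj => hj1 hj2.
have hLw : (0 < Lw.-1)%N.
  by rewrite lt0n; apply/eqP => E; move: hj2; rewrite E muln0; lia.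
have hkp : (kp < N)%N by rewrite /kp /kprime ltn_divLR //; lia.
have hj0 : j != 0%N by lia.
have hw : forall k : int, wcoef Lw wmean wc j k = if k == kp%:Z then wc (Iidx Lw j) else 0.
  by move=> k; rewrite /wcoef (negbTE hj0).
have hNb : Nb%:Z = N%:Z - kp%:Z by rewrite /Nb; lia.
have hq : q%:Z = T%:Z + 1 - Tini%:Z - N%:Z by rewrite /q; lia.
change (T + 1 - Tini - N)%N with q in hrank.
clearbody kp Nb q.
split.
- case=> hrec hu.
  have hz : forall k : int, 1 - Tini%:Z <= k <= kp%:Z -> uj k = 0 /\ yj k = 0.
    suff H : forall n : nat, forall k : int, 1 - Tini%:Z <= k <= kp%:Z -> k <= n%:Z ->
        uj k = 0 /\ yj k = 0.
      by move=> k hk; apply: (H `|k|%N) => //; lia.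
    elim=> [|n IH] k hk hkn.
      by apply: hinit; lia.
    have [hkn'|hkn'] := boolP (k <= n%:Z); first exact: IH.
    have hk1 : 1 <= k by lia.
    split; first by apply: hu; lia.
    rewrite hrec; last by lia.
    rewrite hw.
    have -> : (k - 1 == kp%:Z) = false by apply/eqP; lia.
    rewrite !stack_zero ?mulmx0 ?addr0 // => i hi.
    + by have [] := IH (k - Tini%:Z + i%:Z) ltac:(lia) ltac:(lia).
    + by have [] := IH (k - Tini%:Z + i%:Z) ltac:(lia) ltac:(lia).
  have hykp : yj (kp%:Z + 1) = wc (Iidx Lw j).
    rewrite hrec; last by lia.
    rewrite hw addrK eqxx.
    rewrite !stack_zero ?mulmx0 ?add0r // => i hi.
    + by have [] := hz (kp%:Z + 1 - Tini%:Z + i%:Z) ltac:(lia).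
    + by have [] := hz (kp%:Z + 1 - Tini%:Z + i%:Z) ltac:(lia).
  have /row_freeP [B hB] : row_free (col_mx (hankel uud 1 (Tini + N) q) (hankel yud 1 Tini q)).
    by rewrite /row_free hrank eqxx.
  pose tu := fun t : int => uj (t + kp%:Z + 1 - Tini%:Z).
  pose ty := fun t : int => yj (t + kp%:Z + 1 - Tini%:Z).
  pose g := B *m col_mx (stack tu 1 (Tini + N)) (stack ty 1 Tini).
  have hg : col_mx (hankel uud 1 (Tini + N) q) (hankel yud 1 Tini q) *m g
            = col_mx (stack tu 1 (Tini + N)) (stack ty 1 Tini).
    by rewrite /g mulmxA hB mul1mx.
  rewrite mul_col_mx !hankel_mul in hg; case/eq_col_mx: hg => hgu hgy.
  have hU : forall t : int, 1 <= t <= (Tini + N)%N%:Z -> comb uud g t = tu t.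
    move=> t ht; rewrite (int_nat (a := 1) (t := t)); last by lia.
    by apply: (stack_inj hgu); lia.
  have hY : forall t : int, 1 <= t <= Tini%:Z -> comb yud g t = ty t.
    move=> t ht; rewrite (int_nat (a := 1) (t := t)); last by lia.
    by apply: (stack_inj hgy); lia.
  have hY2 : forall t : int, 1 <= t <= Tini%:Z + Nb%:Z - 1 -> comb yud g t = ty t.
    suff H : forall n : nat, forall t : int, 1 <= t <= Tini%:Z + Nb%:Z - 1 -> t <= n%:Z ->
        comb yud g t = ty t.
      by move=> t ht; apply: (H `|t|%N) => //; lia.
    elim=> [|n IH] t ht htn; first by lia.
    have [htn'|htn'] := boolP (t <= n%:Z); first exact: IH.
    have [htT|htT] := boolP (t <= Tini%:Z); first by apply: hY; lia.
    rewrite (@comb_varx _ _ _ _ _ _ _ _ _ _ _ _ hd); [|lia|lia].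
    rewrite /ty hrec; last by lia.
    rewrite hw.
    have -> : (t + kp%:Z + 1 - Tini%:Z - 1 == kp%:Z) = false by apply/eqP; lia.
    rewrite addr0; congr (_ + _); congr (_ *m _); apply: stack_ext2 => i hi.
    + rewrite IH; [|lia|lia]. by rewrite /ty; congr yj; lia.
    + rewrite hU; last by lia. by rewrite /tu; congr uj; lia.
  exists g; split.
    by move=> k hk; split; [apply: hu | have [] := hz k ltac:(lia)].
  split; first exact: hykp.
  rewrite !mul_col_mx !hankel_mul; congr col_mx; congr col_mx.
  + apply: stack_zero => i hi; rewrite hU; last by lia.
    by have [] := hz (1 + i%:Z + kp%:Z + 1 - Tini%:Z) ltac:(lia).
  + apply: stack_zero => i hi; rewrite hY; last by lia.
    by have [] := hz (1 + i%:Z + kp%:Z + 1 - Tini%:Z) ltac:(lia).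
  + apply: stack_ext2 => i hi; rewrite hU; last by lia.
    by rewrite /tu; congr uj; lia.
  + apply: stack_ext2 => i hi; rewrite hY2; last by lia.
    by rewrite /ty; congr yj; lia.
- case=> g [hz1 [hykp heq]].
  rewrite !mul_col_mx !hankel_mul in heq.
  case/eq_col_mx: heq => /eq_col_mx [h1 h2] /eq_col_mx [h3 h4].
  have hz : forall k : int, 1 - Tini%:Z <= k <= kp%:Z -> uj k = 0 /\ yj k = 0.
    move=> k hk; have [hk0|hk0] := boolP (k <= 0); first by apply: hinit; lia.
    by apply: hz1; lia.
  have hUall : forall s : int, 1 <= s <= Tini%:Z + Nb%:Z - 1 ->
      comb uud g s = uj (s + kp%:Z + 1 - Tini%:Z).
    move=> s hs; have [hsT|hsT] := boolP (s <= Tini%:Z - 1).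
      rewrite (int_nat (a := 1) (t := s)); last by lia.
      rewrite (stack_inj0 h1); last by lia.
      by have [] := hz (1 + (`|s - 1|%N)%:Z + kp%:Z + 1 - Tini%:Z) ltac:(lia).
    rewrite (int_nat (a := Tini%:Z) (t := s)); last by lia.
    rewrite (stack_inj h3); last by lia.
    by congr uj; lia.
  have hYall : forall s : int, 1 <= s <= Tini%:Z + Nb%:Z - 1 ->
      comb yud g s = yj (s + kp%:Z + 1 - Tini%:Z).
    move=> s hs; have [hsT|hsT] := boolP (s <= Tini%:Z - 1).
      rewrite (int_nat (a := 1) (t := s)); last by lia.
      rewrite (stack_inj0 h2); last by lia.
      by have [] := hz (1 + (`|s - 1|%N)%:Z + kp%:Z + 1 - Tini%:Z) ltac:(lia).
    rewrite (int_nat (a := Tini%:Z) (t := s)); last by lia.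
    rewrite (stack_inj h4); last by lia.
    by congr yj; lia.
  split; last by move=> k hk; have [] := hz1 k hk.
  move=> k hk; rewrite hw.
  have [hk1|hk1] := boolP (k <= kp%:Z).
    have -> : (k - 1 == kp%:Z) = false by apply/eqP; lia.
    have [_ ->] := hz k ltac:(lia).
    rewrite !stack_zero ?mulmx0 ?addr0 // => i hi.
    + by have [] := hz (k - Tini%:Z + i%:Z) ltac:(lia).
    + by have [] := hz (k - Tini%:Z + i%:Z) ltac:(lia).
  have [hk2|hk2] := boolP (k == kp%:Z + 1).
    rewrite (eqP hk2) hykp addrK eqxx.
    rewrite !stack_zero ?mulmx0 ?add0r // => i hi.
    + by have [] := hz (kp%:Z + 1 - Tini%:Z + i%:Z) ltac:(lia).
    + by have [] := hz (kp%:Z + 1 - Tini%:Z + i%:Z) ltac:(lia).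
  have -> : (k - 1 == kp%:Z) = false by apply/eqP; lia.
  have -> : k = (k - kp%:Z - 1 + Tini%:Z) + kp%:Z + 1 - Tini%:Z by lia.
  rewrite -hYall; last by lia.
  rewrite (@comb_varx _ _ _ _ _ _ _ _ _ _ _ _ hd); [|lia|lia].
  rewrite addr0; congr (_ + _); congr (_ *m _); apply: stack_ext2 => i hi.
  + rewrite hYall; last by lia. by congr yj; lia.
  + rewrite hUall; last by lia. by congr uj; lia.
Qed.
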